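(* Let $q$ be a prime power, $L\ge1$, and let $\mathcal{N}_1$ be a multicast network with source dimension $\omega\ge2$ that is vector linearly solvable over $\mathrm{GF}(q)^L$ but not scalar linearly solvable over $\mathrm{GF}(q^L)$. Set $n=q^L$ and construct the multicast network $\mathcal{N}$ of source dimension $\omega$ as follows: create a source node $s'$ and a node $s$, with $\omega$ parallel edges from $s'$ to $s$; add $\mathcal{N}_1$ as a subnetwork and create $\omega$ edges from $s$ to the original source node $s_1$ of $\mathcal{N}_1$; add an $(n+1,2)$-combination network $\mathcal{N}_2$ as another subnetwork and create $2$ edges from $s$ to its original source node $s_2$; for every original receiver $t$ of $\mathcal{N}_2$, create $\omega-2$ edges from $s$ to $t$. The receivers of $\mathcal{N}$ are exactly the original receivers of $\mathcal{N}_1$ and of $\mathcal{N}_2$. Then $\mathcal{N}$ has a vector linear solution over $\mathrm{GF}(q)^L$; $\mathcal{N}$ is not scalar linearly solvable over $\mathrm{GF}(q')$ for any prime power $q'\le q^L$; and $\mathcal{N}$ is not vector linearly solvable over $\mathrm{GF}(q')^{L'}$ for any prime power $q'$ and integer $L'\ge1$ with $q'^{L'}<q^L$.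
   Context: A multicast network is a finite directed acyclic multigraph with a unique source node $s$ and a set $T$ of receivers; every edge has unit capacity. $In(v)$, $Out(v)$ denote the incoming/outgoing edges of node $v$; $\omega=|Out(s)|$ is the source dimension, and every receiver has $\omega$ edge-disjoint paths from $s$. For a prime power $q$ and $L\ge1$, a vector linear code over $\mathrm{GF}(q)^L$ (of dimension $L$ over $\mathrm{GF}(q)$) assigns to each pair $(d,e)$ of edges an $L\times L$ matrix $\mathbf{K}_{d,e}$ over $\mathrm{GF}(q)$, zero unless $d\in In(v)$, $e\in Out(v)$ for some node $v$. Global encoding kernels are $\omega L\times L$ matrices $\mathbf{F}_e$ with $[\mathbf{F}_e]_{e\in Out(s)}$ the $\omega L\times\omega L$ identity and $\mathbf{F}_e=\sum_{d\in In(v)}\mathbf{F}_d\mathbf{K}_{d,e}$ for $e\in Out(v)$, $v\ne s$. The code is a vector linear solution if $[\mathbf{F}_e]_{e\in In(t)}$ has rank $\omega L$ for every receiver $t$; the network is then vector linearly solvable over $\mathrm{GF}(q)^L$. Scalar linear codes/solutions over $\mathrm{GF}(Q)$ are the case of dimension $1$ over $\mathrm{GF}(Q)$. The $(n+1,2)$-combination network consists of a source node, $n+1$ intermediate nodes each connected from the source by one edge, and, for every pair of distinct intermediate nodes, a receiver connected by one edge from each of the two; it has source dimension $2$. *)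

(* Defs.v *)
From HB Require Import structures.
From mathcomp Require Import all_boot all_order all_algebra.
Set Implicit Arguments. Unset Strict Implicit. Unset Printing Implicit Defensive.
Import GRing.Theory.
Local Open Scope ring_scope.

(* A network is given by a finite node type V, a finite edge type E (so      *)
(* parallel edges are allowed: a multigraph), tail/head maps, a source s and *)
(* a set T of receivers.  All edges have unit capacity.                       *)
Section Network.
Variables (V E : finType) (tl hd : E -> V).

Definition In_ (v : V) : {set E} := [set e | hd e == v].
Definition Out_ (v : V) : {set E} := [set e | tl e == v].

Definition acyclic : Prop := exists r : V -> nat, forall e, (r (tl e) < r (hd e))%N.

Definition is_epath (u v : V) (p : seq E) : bool :=
  if p is e :: p' then
    [&& tl e == u, path (fun a b => hd a == tl b) e p' & hd (last e p') == v]
  else false.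

Definition edge_disjoint_paths (k : nat) (u v : V) : Prop :=
  exists P : 'I_k -> seq E,
    (forall i, is_epath u v (P i)) /\
    (forall i j, i != j -> [disjoint P i & P j]).

Definition src_dim (s : V) : nat := #|Out_ s|.

Definition multicast_network (s : V) (T : {set V}) : Prop :=
  [/\ acyclic, In_ s = set0 &
      forall t, t \in T -> edge_disjoint_paths (src_dim s) s t].

(* the L columns of the (w*L) x (w*L) identity corresponding to block i *)
Definition id_block (F : fieldType) (w L : nat) (i : nat) : 'M[F]_(w * L, L) :=
  \matrix_(r, c) (((r : nat) == i * L + c)%N)%:R.

Definition in_concat (F : fieldType) (m L : nat) (G : E -> 'M[F]_(m, L)) (t : V)
  : 'M[F]_(m, \sum_(j < #|In_ t|) L) :=
  \mxrow_(j < #|In_ t|) G (@enum_val E (mem (In_ t)) j).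

Definition is_vl_solution (F : fieldType) (L : nat) (s : V) (T : {set V})
    (K : E -> E -> 'M[F]_L) (G : E -> 'M[F]_(src_dim s * L, L)) : Prop :=
  [/\
      forall d e, hd d != tl e -> K d e = 0,
      exists iota : E -> 'I_(src_dim s),
        {in Out_ s &, injective iota} /\
        (forall e, e \in Out_ s -> G e = id_block F (src_dim s) L (iota e)),
      forall e, tl e != s -> G e = \sum_(d in In_ (tl e)) G d *m K d e &
      forall t, t \in T -> \rank (in_concat G t) = (src_dim s * L)%N].

Definition vl_solvable (s : V) (T : {set V}) (Q L : nat) : Prop :=
  exists F : finFieldType, #|F| = Q /\
    exists (K : E -> E -> 'M[F]_L) (G : E -> 'M[F]_(src_dim s * L, L)),
      @is_vl_solution F L s T K G.

Definition sl_solvable (s : V) (T : {set V}) (Q : nat) : Prop :=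
  vl_solvable s T Q 1.

End Network.

Definition prime_power (q : nat) : Prop :=
  exists p k : nat, [/\ prime p, (0 < k)%N & q = (p ^ k)%N].

Definition cpair (m : nat) := {x : 'I_m * 'I_m | (x.1 < x.2)%N}.
(* nodes: source (inl (inl tt)), intermediate i, receiver for pair {i<j} *)
Definition cnode (m : nat) : finType := ((unit + 'I_m) + cpair m)%type.
(* edges: source -> i ; intermediate (x.1 if false, x.2 if true) -> receiver x *)
Definition cedge (m : nat) : finType := ('I_m + (cpair m * bool))%type.
Definition ctl (m : nat) (e : cedge m) : cnode m :=
  match e with
  | inl i => inl (inl tt)
  | inr (x, b) => inl (inr (if b then (val x).2 else (val x).1))
  end.
Definition chd (m : nat) (e : cedge m) : cnode m :=
  match e with
  | inl i => inl (inr i)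
  | inr (x, _) => inr x
  end.
Definition csrc (m : nat) : cnode m := inl (inl tt).
Definition crcv (m : nat) : {set cnode m} := [set inr x | x : cpair m].

(* Nodes:  s' | s | V1 | combination-network nodes                           *)
(* Edges:  s'->s (omega) | E1 | s->s1 (omega) | comb. edges | s->s2 (2)     *)
(*         | s->t (omega-2 for every comb. receiver t)                       *)
Section Construction.
Variables (V1 E1 : finType) (tl1 hd1 : E1 -> V1) (s1 : V1) (T1 : {set V1}).
Variables (w n : nat).

Definition Nnode : finType := (((unit + unit) + V1) + cnode n.+1)%type.
Definition Nedge : finType :=
  ((((('I_w + E1) + 'I_w) + cedge n.+1) + 'I_2) + (cpair n.+1 * 'I_(w - 2)))%type.

Definition N_s' : Nnode := inl (inl (inl tt)).
Definition N_s : Nnode := inl (inl (inr tt)).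
Definition N_of1 (v : V1) : Nnode := inl (inr v).
Definition N_of2 (v : cnode n.+1) : Nnode := inr v.

Definition Ntl (e : Nedge) : Nnode :=
  match e with
  | inl (inl (inl (inl (inl _)))) => N_s'
  | inl (inl (inl (inl (inr d)))) => N_of1 (tl1 d)
  | inl (inl (inl (inr _))) => N_s
  | inl (inl (inr d)) => N_of2 (ctl d)
  | inl (inr _) => N_s
  | inr _ => N_s
  end.

Definition Nhd (e : Nedge) : Nnode :=
  match e with
  | inl (inl (inl (inl (inl _)))) => N_s
  | inl (inl (inl (inl (inr d)))) => N_of1 (hd1 d)
  | inl (inl (inl (inr _))) => N_of1 s1
  | inl (inl (inr d)) => N_of2 (chd d)
  | inl (inr _) => N_of2 (csrc n.+1)
  | inr (x, _) => N_of2 (inr x)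
  end.

Definition Nrcv : {set Nnode} :=
  [set N_of1 t | t in T1] :|: [set N_of2 t | t in crcv n.+1].

End Construction.

(* Main.v *)
From HB Require Import structures.
From mathcomp Require Import all_boot all_order all_algebra all_field zify.
Require Import Defs.
Set Implicit Arguments. Unset Strict Implicit. Unset Printing Implicit Defensive.
Import GRing.Theory.
Section P1.
Local Open Scope ring_scope.

Lemma ext_field (F : finFieldType) (p k L : nat) :
  prime p -> (0 < k)%N -> #|F| = (p ^ k)%N -> (0 < L)%N ->
  exists K : fieldExtType F, \dim {:K} = L.
Proof.
move=> pr_p k_gt0 cardF L_gt0.
have pcharFp := card_finPcharP cardF pr_p.
pose m := (p ^ (k * L))%N.
have m_gt1: (m > 1)%N by rewrite (ltn_exp2l 0) ?prime_gt1 ?muln_gt0 ?k_gt0.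
have m_gt0 := ltnW m_gt1; have m1_gt0: (m.-1 > 0)%N by rewrite -ltnS prednK.
pose q (R : nzRingType) : {poly R} := 'X^m - 'X.
have Dq R: q R = ('X^(m.-1) - 1) * ('X - 0).
  by rewrite subr0 mulrBl mul1r -exprSr prednK.
have /FinSplittingFieldFor[/= L0 splitLq]: q F != 0.
  by rewrite Dq monic_neq0 ?rpredM ?monicXsubC ?monicXnsubC.
rewrite rmorphB rmorphXn /= map_polyX -/(q L0) in splitLq.
have pcharL: p \in [pchar L0] by rewrite pchar_lalg.
pose Fm := FinFieldExtType L0; exists L0.
have /finField_galois_generator[/= a _ Da]: (1 <= {:L0})%VS by apply: sub1v.
pose Em := fixedSpace (a ^+ L)%g; rewrite dimv1 expn1 in Da.
have{splitLq} [zs DqL defL] := splitLq.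
have Uzs: uniq zs.
  rewrite -separable_prod_XsubC -(eqp_separable DqL) Dq separable_root andbC.
  rewrite /root !hornerE subr_eq0 eq_sym expr0n gtn_eqF ?oner_eq0 //=.
  rewrite cyclotomic.separable_Xn_sub_1 // -subn1 natrB // subr_eq0.
  by rewrite natrX pcharf0 // expr0n gtn_eqF ?muln_gt0 ?k_gt0 // eq_sym oner_eq0.
have cardFm : #|Fm| = m.
  suffices /eq_card->: Fm =i zs.
    apply: succn_inj; rewrite (card_uniqP _) //= -(size_prod_XsubC _ id).
    by rewrite -(eqp_size DqL) size_polyDl size_polyXn // size_polyN size_polyX.
  have in_zs: zs =i Em.
    move=> z; rewrite -root_prod_XsubC -(eqp_root DqL) (sameP fixedSpaceP eqP).
    rewrite /root !hornerE subr_eq0 /= /m; congr (_ == z).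
    rewrite expnM -cardF.
    elim: (L) => [|i IHi]; first by rewrite gal_id.
    by rewrite expgSr expnSr exprM IHi galM ?Da ?memvf.
  suffices defEm: Em = {:L0}%VS by move=> z; rewrite in_zs defEm memvf.
  apply/eqP; rewrite eqEsubv subvf -defL -[Em]subfield_closed agenvS //.
  by rewrite subv_add sub1v; apply/span_subvP=> z; rewrite in_zs.
have : #|Fm| = (#|F| ^ \dim {:L0})%N.
  have := card_vspace (fullv : {vspace finvect_type L0}).
  by rewrite card_vspacef.
rewrite cardFm cardF /m -expnM => /eqP; rewrite eqn_exp2l ?prime_gt1 //.
by rewrite eqn_pmul2l // => /eqP.
Qed.

End P1.

Module SpreadM.
Import VectorInternalTheory.
Local Open Scope ring_scope.

Section Spread.
Variables (F : finFieldType) (K : fieldExtType F).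
Local Notation n := (dim K).
Local Notation FK := (finvect_type K).

Definition mulM (a : K) : 'M[F]_n := \matrix_(i < n) v2r (a * r2v (delta_mx 0 i)).

Lemma mulME (a : K) (u : 'rV[F]_n) : u *m mulM a = v2r (a * r2v u).
Proof.
rewrite mulmx_sum_row {2}(row_sum_delta u) linear_sum /= mulr_sumr linear_sum.
apply: eq_bigr => i _; rewrite rowK linearZ /= -scalerAr linearZ.
by [].
Qed.

Definition eK (j : nat) : K := nth 0 (enum FK) j.

Definition Csp (j : nat) : 'M[F]_(n, n + n) :=
  if (j < #|FK|)%N then row_mx 1%:M (mulM (eK j)) else row_mx 0 1%:M.

Lemma Csp_free j : row_free (Csp j).
Proof.
apply/row_freeP; rewrite /Csp; case: ifP => _.
  by exists (col_mx 1%:M 0); rewrite mul_row_col mul1mx mulmx0 addr0.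
by exists (col_mx 0 1%:M); rewrite mul_row_col mul1mx mulmx0 add0r.
Qed.

Lemma Csp_cap i j : (i <= #|FK|)%N -> (j <= #|FK|)%N -> i != j ->
  (Csp i :&: Csp j)%MS == 0.
Proof.
wlog lt_ij : i j / (i < j)%N.
  move=> IH Hi Hj ne; case: (ltngtP i j) => [lt|lt|eq]; first exact: IH.
    by rewrite capmxC; apply: IH => //; rewrite eq_sym.
  by rewrite eq in ne; rewrite eqxx in ne.
move=> Hi Hj _; have iK : (i < #|FK|)%N by apply: leq_trans lt_ij Hj.
apply/rowV0P => v; rewrite sub_capmx => /andP[/submxP[u1 ->] /submxP[u2]].
rewrite /Csp iK mul_mx_row mulmx1.
case: ifP => jK.
  rewrite mul_mx_row mulmx1 => /eq_row_mx[e1]; rewrite !mulME e1 => /v2r_inj.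
  move/eqP; rewrite -subr_eq0 -mulrBl mulf_eq0 => /orP[|/eqP].
    rewrite subr_eq0 /eK => /eqP; have U := enum_uniq FK.
    move/(congr1 (fun x : K => index (x : FK) (enum FK))).
    rewrite !index_uniq // -?cardE // => ij.
    by move: lt_ij; rewrite ij ltnn.
  move/(congr1 v2r); rewrite r2vK linear0 => ->.
  by rewrite linear0 mulr0 linear0 row_mx0.
rewrite mul_mx_row mulmx0 => /eq_row_mx[-> _].
by rewrite mul0mx row_mx0.
Qed.

Lemma Csp_rank i j : (i <= #|FK|)%N -> (j <= #|FK|)%N -> i != j ->
  \rank (Csp i + Csp j)%MS = (n + n)%N.
Proof.
move=> Hi Hj ne; have := mxrank_sum_cap (Csp i) (Csp j).
move/eqP: (Csp_free i) => ->; move/eqP: (Csp_free j) => ->.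
by rewrite (eqP (Csp_cap Hi Hj ne)) mxrank0 addn0.
Qed.

Lemma card_FK : #|FK| = (#|F| ^ n)%N.
Proof.
have := card_vspace (fullv : {vspace FK}).
by rewrite card_vspacef dimvf.
Qed.

End Spread.

Lemma spread (F : finFieldType) (L : nat) :
  (exists K : fieldExtType F, \dim {:K} = L) ->
  exists C : nat -> 'M[F]_(L, L + L), (forall i, row_free (C i)) /\
    (forall i j, (i <= #|F| ^ L)%N -> (j <= #|F| ^ L)%N -> i != j ->
        \rank (C i + C j)%MS = (L + L)%N).
Proof.
case=> K; rewrite dimvf => dK.
have := @Csp_free F K; have := @Csp_rank F K; rewrite card_FK.
move: (@Csp F K); rewrite dK => C Hr Hf.
by exists C.
Qed.

End SpreadM.
Import SpreadM.

Module MP3.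
Local Open Scope ring_scope.

Section Gen.
Variables (V E : finType) (tl hd : E -> V).

Definition rsum (F : fieldType) (k L : nat) (G : E -> 'M[F]_(k, L)) (t : V) : 'M[F]_k :=
  (\sum_(d in In_ hd t) <<(G d)^T>>)%MS.

Lemma rank_in_concat (F : fieldType) k L (G : E -> 'M[F]_(k, L)) t :
  \rank (in_concat hd G t) = \rank (rsum G t).
Proof.
rewrite -mxrank_tr /in_concat tr_mxrow eqmx_col /rsum.
by rewrite (big_enum_val (fun d => <<(G d)^T>>%MS)).
Qed.

Definition sol (F : fieldType) (L m : nat) (s : V) (T : {set V})
    (K : E -> E -> 'M[F]_L) (G : E -> 'M[F]_(m * L, L)) : Prop :=
  [/\ forall d e, hd d != tl e -> K d e = 0,
      exists iota : E -> 'I_m,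
        {in Out_ tl s &, injective iota} /\
        (forall e, e \in Out_ tl s -> G e = id_block F m L (iota e)),
      forall e, tl e != s -> G e = \sum_(d in In_ hd (tl e)) G d *m K d e &
      forall t, t \in T -> \rank (rsum G t) = (m * L)%N].

Lemma vl_solvableE s T Q L : vl_solvable tl hd s T Q L <->
  exists F : finFieldType, #|F| = Q /\ exists K G, @sol F L (src_dim tl s) s T K G.
Proof.
split; case=> F [HF [K [G [h1 h2 h3 h4]]]]; exists F; split=> //; exists K, G;
  split=> // t Ht; rewrite ?rank_in_concat ?h4 // -rank_in_concat h4 //.
Qed.

Lemma epath_lt (r : V -> nat) : (forall e, r (tl e) < r (hd e))%N ->
  forall u v p, is_epath tl hd u v p -> (r u < r v)%N.
Proof.
move=> acyc u v [|e p] //= /and3P[/eqP <- Hp /eqP <-].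
elim: p e Hp => [|e' p IH] e /=; first by rewrite acyc.
case/andP=> /eqP h Hp; apply: ltn_trans (acyc e) _; rewrite h; exact: IH.
Qed.

Lemma rcv_neq_src s T : multicast_network tl hd s T -> (0 < src_dim tl s)%N ->
  forall t, t \in T -> t != s.
Proof.
case=> [[r acyc] _ Hp] w0 t /Hp [P [HP _]].
have := epath_lt acyc (HP (Ordinal w0)).
by apply: contraTneq => ->; rewrite ltnn.
Qed.

Lemma sol_rec_sub (F : fieldType) L m s K (G : E -> 'M[F]_(m * L, L)) :
  (forall e, tl e != s -> G e = \sum_(d in In_ hd (tl e)) G d *m K d e) ->
  forall e, tl e != s -> ((G e)^T <= rsum G (tl e))%MS.
Proof.
move=> Hr e /Hr ->; rewrite linear_sum /=; apply/summx_sub => d Hd.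
rewrite trmx_mul; apply: submx_trans (submxMl _ _) _.
by rewrite /rsum (sumsmx_sup d) // genmxE.
Qed.

End Gen.

End MP3.
Import MP3.

Module MP4.
Local Open Scope ring_scope.

Section Net.
Variables (V1 E1 : finType) (tl1 hd1 : E1 -> V1) (s1 : V1) (w n : nat).
Local Notation NE := (Nedge E1 w n).
Local Notation NV := (Nnode V1 n).
Local Notation Ntl' := (@Ntl V1 E1 tl1 w n).
Local Notation Nhd' := (@Nhd V1 E1 hd1 s1 w n).

Definition e_sp (i : 'I_w) : NE := inl (inl (inl (inl (inl i)))).
Definition e_1 (d : E1) : NE := inl (inl (inl (inl (inr d)))).
Definition e_s1 (j : 'I_w) : NE := inl (inl (inl (inr j))).
Definition e_ci (i : 'I_n.+1) : NE := inl (inl (inr (inl i))).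
Definition e_cr (x : cpair n.+1) (b : bool) : NE := inl (inl (inr (inr (x, b)))).
Definition e_2 (k : 'I_2) : NE := inl (inr k).
Definition e_t (x : cpair n.+1) (k : 'I_(w - 2)) : NE := inr (x, k).

Section Big.
Variables (R : Type) (idx : R) (op : Monoid.com_law idx) (f : NE -> R).

Lemma bigNhd v : \big[op/idx]_(d in In_ Nhd' v) f d = \big[op/idx]_(d | Nhd' d == v) f d.
Proof. by apply: eq_bigl => d; rewrite inE. Qed.

Lemma big_pairE (I J : finType) (F : I * J -> R) :
  \big[op/idx]_p F p = \big[op/idx]_i \big[op/idx]_j F (i, j).
Proof. by rewrite pair_bigA; apply: eq_bigr => [[]]. Qed.

Lemma eq_of1 (a b : V1) : (N_of1 n a == N_of1 n b) = (a == b). Proof. by []. Qed.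
Lemma eq_of2 (a b : cnode n.+1) : (N_of2 V1 a == N_of2 V1 b) = (a == b). Proof. by []. Qed.
Lemma eq_ci (a b : 'I_n.+1) : (inl (inr a) == inl (inr b) :> cnode n.+1) = (a == b). Proof. by []. Qed.
Lemma eq_cr (a b : cpair n.+1) : (inr a == inr b :> cnode n.+1) = (a == b). Proof. by []. Qed.

Lemma big_sel (I J : finType) (x : I) (c : I -> bool) (F : I -> J -> R) :
  (forall i, c i = (i == x)) ->
  \big[op/idx]_i \big[op/idx]_j (if c i then F i j else idx) = \big[op/idx]_j F x j.
Proof.
move=> Hc; rewrite (bigD1 x) //= Hc eqxx [X in op _ X]big1 ?Monoid.mulm1 // => i Hi.
by rewrite Hc (negbTE Hi) big1_eq.
Qed.

Ltac simplIn := rewrite bigNhd big_mkcond !big_sumType /= !big_pairE /= ?big1_eq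
  ?Monoid.mulm1 ?Monoid.mul1m ?eq_of1 ?eq_of2 ?eq_ci ?eq_cr.

Lemma big_In_s : \big[op/idx]_(d in In_ Nhd' (N_s V1 n)) f d = \big[op/idx]_(i < w) f (e_sp i).
Proof. by simplIn. Qed.

Lemma big_In_1 u : \big[op/idx]_(d in In_ Nhd' (N_of1 n u)) f d = 
  op (\big[op/idx]_(d in In_ hd1 u) f (e_1 d)) (if u == s1 then \big[op/idx]_(j < w) f (e_s1 j) else idx).
Proof.
simplIn; congr (op _ _).
  by rewrite [RHS]big_mkcond; apply: eq_bigr => d _; rewrite inE eq_of1.
rewrite eq_sym; case: eqP => _ //; exact: big1_eq.
Qed.

Lemma big_In_c : \big[op/idx]_(d in In_ Nhd' (N_of2 V1 (csrc n.+1))) f d = \big[op/idx]_(k < 2) f (e_2 k).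
Proof. by simplIn. Qed.

Lemma big_In_i i : \big[op/idx]_(d in In_ Nhd' (N_of2 V1 (inl (inr i)))) f d = f (e_ci i).
Proof. by simplIn; rewrite -big_mkcond big_pred1_eq. Qed.

Lemma big_In_r x : \big[op/idx]_(d in In_ Nhd' (N_of2 V1 (inr x))) f d = 
  op (\big[op/idx]_(b : bool) f (e_cr x b)) (\big[op/idx]_(k < w - 2) f (e_t x k)).
Proof.
by simplIn; congr (op _ _); apply: big_sel.
Qed.
End Big.

Lemma Out_s' e : e \in Out_ Ntl' (N_s' V1 n) -> exists i, e = e_sp i.
Proof. by rewrite inE; case: e => [[[[[i|]|]|]|]|] // _; exists i. Qed.

Lemma Out_s'E : Out_ Ntl' (N_s' V1 n) = [set e_sp i | i : 'I_w].
Proof.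
apply/setP => e; apply/idP/imsetP => [/Out_s' [i ->]| [i _ ->]]; last by rewrite inE.
by exists i.
Qed.

Lemma src_dimN : src_dim Ntl' (N_s' V1 n) = w.
Proof.
rewrite /src_dim Out_s'E card_imset ?card_ord // => i j; rewrite /e_sp; by case.
Qed.

End Net.

End MP4.
Import MP4.

Module MP5.
Local Open Scope ring_scope.

Section IB.
Variables (F : fieldType) (w L : nat).
Local Notation IB j := (id_block F w L j).

Lemma sumIB (j : nat) (M : 'M[F]_L) : (j < w)%N ->
  \sum_(i < w) IB i *m (if (i : nat) == j then M else 0) = IB j *m M.
Proof.
move=> jw; rewrite (bigD1 (Ordinal jw)) //= eqxx big1 ?addr0 // => i Hi.
by rewrite ifF ?mulmx0 //; apply: contraNF Hi => /eqP Hij; apply/eqP/val_inj.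
Qed.

Lemma IB_full : (0 < L)%N -> (1%:M <= \sum_(j < w) <<(IB j)^T>>)%MS.
Proof.
move=> L0; apply/row_subP => r.
have jw : (r %/ L < w)%N by rewrite ltn_divLR // mulnC.
rewrite (sumsmx_sup (Ordinal jw)) // genmxE.
have -> : row r (1%:M : 'M[F]_(w * L)) = row (Ordinal (ltn_pmod r L0)) (IB (r %/ L))^T.
  apply/rowP => k; rewrite !mxE /= -divn_eq.
  by rewrite eq_sym.
exact: row_sub.
Qed.

End IB.

Section ClaimA.
Variables (V1 E1 : finType) (tl1 hd1 : E1 -> V1) (s1 : V1) (T1 : {set V1}) (w n : nat).
Variables (F : fieldType) (L : nat) (K1 : E1 -> E1 -> 'M[F]_L) (G1 : E1 -> 'M[F]_(w * L, L)).
Variable (C : nat -> 'M[F]_(L, L + L)).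
Hypotheses (L0 : (0 < L)%N) (w2 : (2 <= w)%N) (In_s1 : In_ hd1 s1 = set0)
  (T1s1 : forall t, t \in T1 -> t != s1) (sol1 : sol tl1 hd1 s1 T1 K1 G1)
  (HC : forall i j, (i <= n)%N -> (j <= n)%N -> i != j -> \rank (C i + C j)%MS = (L + L)%N).
Variable (iota1 : E1 -> 'I_w).
Hypothesis (Hiota1 : forall e, e \in Out_ tl1 s1 -> G1 e = id_block F w L (iota1 e)).

Local Notation NE := (Nedge E1 w n).
Local Notation Ntl' := (@Ntl V1 E1 tl1 w n).
Local Notation Nhd' := (@Nhd V1 E1 hd1 s1 w n).
Local Notation IB j := (id_block F w L j).

Definition Gc (i : nat) : 'M[F]_(w * L, L) :=
  IB 0 *m (lsubmx (C i))^T + IB 1 *m (rsubmx (C i))^T.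

Definition GA (e : NE) : 'M[F]_(w * L, L) :=
  match e with
  | inl (inl (inl (inl (inl i)))) => IB i
  | inl (inl (inl (inl (inr d)))) => G1 d
  | inl (inl (inl (inr j))) => IB j
  | inl (inl (inr (inl i))) => Gc i
  | inl (inl (inr (inr (x, b)))) => Gc (if b then (val x).2 else (val x).1)
  | inl (inr k) => IB k
  | inr (x, k) => IB (k + 2)
  end.

Definition KA (d e : NE) : 'M[F]_L :=
  match d with
  | inl (inl (inl (inl (inl i)))) =>
      match e with
      | inl (inl (inl (inr j))) => if (i : nat) == j then 1 else 0
      | inl (inr k) => if (i : nat) == k then 1 else 0
      | inr (x, k) => if (i : nat) == (k + 2)%N then 1 else 0
      | _ => 0
      end
  | inl (inl (inl (inl (inr d')))) =>
      match e with
      | inl (inl (inl (inl (inr e')))) => K1 d' e'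
      | _ => 0
      end
  | inl (inl (inl (inr j))) =>
      match e with
      | inl (inl (inl (inl (inr e')))) =>
          if (tl1 e' == s1) && ((iota1 e' : nat) == j) then 1 else 0
      | _ => 0
      end
  | inl (inr k) =>
      match e with
      | inl (inl (inr (inl i))) =>
          if (k : nat) == 0%N then (lsubmx (C i))^T else (rsubmx (C i))^T
      | _ => 0
      end
  | inl (inl (inr (inl i))) =>
      match e with
      | inl (inl (inr (inr (x, b)))) =>
          if i == (if b then (val x).2 else (val x).1) then 1 else 0
      | _ => 0
      end
  | _ => 0
  end.

Lemma KA0 d e : Nhd' d != Ntl' e -> KA d e = 0.
Proof.
case: sol1 => HK1 _ _ _.
case: d => [[[[[i|d]|j]|[i|[x b]]]|k]|[x k]];
case: e => [[[[[i'|d']|j']|[i'|[x' b']]]|k']|[x' k']] //=; try by rewrite eqxx.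
- exact: HK1.
- by case: (tl1 d' =P s1) => [->|] //=; rewrite eqxx.
- by rewrite eq_of2 eq_ci; case: eqP.

Qed.


Lemma GA_rec e : Ntl' e != N_s' V1 n ->
  GA e = \sum_(d in In_ Nhd' (Ntl' e)) GA d *m KA d e.
Proof.
case: sol1 => _ _ Hrec1 _.
case: e => [[[[[i|d]|j]|[i|[x b]]]|k]|[x k]] //= _.
- rewrite big_In_1 /=; case: (tl1 d =P s1) => [Hd|Hd] /=.
    rewrite Hd In_s1 big_set0 add0r /=.
    under eq_bigr => j _ do rewrite eq_sym.
    by rewrite sumIB ?mulmx1 // Hiota1 // inE Hd.
  by rewrite addr0 -Hrec1 //; apply/eqP.
- rewrite big_In_s /= sumIB ?mulmx1 //.
- by rewrite big_In_c !big_ord_recl big_ord0 /= addr0.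
- by rewrite big_In_i /= eqxx mulmx1.
- by rewrite big_In_s /= sumIB ?mulmx1 // (leq_trans _ w2).
- rewrite big_In_s /= sumIB ?mulmx1 //.
  by rewrite addnC -ltn_subRL ltn_ord.
Qed.


Definition JA : 'M[F]_(L + L, w * L) := col_mx (IB 0)^T (IB 1)^T.

Lemma GcT i : (Gc i)^T = C i *m JA.
Proof.
rewrite /Gc /JA -[in RHS](hsubmxK (C i)) mul_row_col linearD /= !trmx_mul !trmxK.
by [].
Qed.

Lemma JA_sub i j : (i <= n)%N -> (j <= n)%N -> i != j ->
  (JA <= <<(Gc i)^T>> + <<(Gc j)^T>>)%MS.
Proof.
move=> Hi Hj ne; rewrite (adds_eqmx (genmxE _) (genmxE _)) !GcT.
rewrite -addsmxMr -{1}[JA]mul1mx submxMr //.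
by apply: submx_full; rewrite /row_full HC.
Qed.

Lemma GA_rank t : t \in Nrcv T1 n -> \rank (rsum Nhd' GA t) = (w * L)%N.
Proof.
case: sol1 => _ _ _ Hr1.
case/setUP => /imsetP [t1 Ht1 ->].
  rewrite /rsum big_In_1 (negbTE (T1s1 Ht1)) Monoid.mulm1.
  exact: Hr1.
case/imsetP: Ht1 => x _ ->.
rewrite /rsum big_In_r; apply/eqP; rewrite eqn_leq rank_leq_col /=.
rewrite -{1}(mxrank1 F (w * L)) mxrankS //.
apply: submx_trans (@IB_full F w L L0) _; apply/sumsmx_subP => j _; rewrite genmxE.
case: (ltnP j 2) => j2.
  apply: submx_trans _ (addsmxSl _ _).
  have x12 : ((val x).1 : nat) != (val x).2 by rewrite neq_ltn (valP x).
  have HJ := JA_sub (ltn_ord (val x).1) (ltn_ord (val x).2) x12.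
  apply: (@submx_trans _ _ _ _ _ _ JA); last apply: submx_trans HJ _.
    case: j j2 => [[|[|j]]] //= _ _.
      have -> : (IB 0)^T = row_mx 1%:M 0 *m JA.
        by rewrite /JA mul_row_col mul1mx mul0mx addr0.
      exact: submxMl.
    have -> : (IB 1)^T = row_mx 0 1%:M *m JA.
      by rewrite /JA mul_row_col mul1mx mul0mx add0r.
    exact: submxMl.
  rewrite addsmx_sub (sumsmx_sup false) // ?(sumsmx_sup true) //.
have jw2 : (j - 2 < w - 2)%N by have := ltn_ord j; lia.
apply: submx_trans _ (addsmxSr _ _).
rewrite (sumsmx_sup (Ordinal jw2)) // genmxE /= subnK //.
Qed.


Lemma claimA_sol : sol Ntl' Nhd' (N_s' V1 n) (Nrcv T1 n) KA GA.
Proof.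
have w0 : (0 < w)%N by apply: leq_trans w2.
pose i0 : 'I_w := Ordinal w0.
split.
- exact: KA0.
- exists (fun e : NE => if e is inl (inl (inl (inl (inl i)))) then i else i0).
  split.
    by move=> e1 e2 /Out_s' [i ->] /Out_s' [j ->] /= ->.
  by move=> e /Out_s' [i ->].
- exact: GA_rec.
- exact: GA_rank.
Qed.

End ClaimA.

Lemma claimA (V1 E1 : finType) (tl1 hd1 : E1 -> V1) (s1 : V1) (T1 : {set V1}) (w n : nat)
  (F : fieldType) (L : nat) (K1 : E1 -> E1 -> 'M[F]_L) (G1 : E1 -> 'M[F]_(w * L, L))
  (C : nat -> 'M[F]_(L, L + L)) :
  (0 < L)%N -> (2 <= w)%N -> In_ hd1 s1 = set0 ->
  (forall t, t \in T1 -> t != s1) -> sol tl1 hd1 s1 T1 K1 G1 ->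
  (forall i j, (i <= n)%N -> (j <= n)%N -> i != j -> \rank (C i + C j)%MS = (L + L)%N) ->
  exists (K : Nedge E1 w n -> Nedge E1 w n -> 'M[F]_L) (G : Nedge E1 w n -> 'M[F]_(w * L, L)), sol (@Ntl V1 E1 tl1 w n) (@Nhd V1 E1 hd1 s1 w n) (N_s' V1 n) (Nrcv T1 n) K G.
Proof.
move=> L0 w2 Hin HT sol1 HC; have [_ [iota1 [_ Hiota]] _ _] := sol1.
by eexists; eexists; apply: (claimA_sol L0 w2 Hin HT sol1 HC Hiota).
Qed.

End MP5.
Import MP5.

Module MP6.
Local Open Scope ring_scope.

Lemma card_bigcup_disj (T : finType) (S : nat -> {set T}) m :
  (forall i j, (i < j < m)%N -> [disjoint S i & S j]) ->
  #|\bigcup_(i < m) S i| = (\sum_(i < m) #|S i|)%N.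
Proof.
elim: m => [|m IH] H; first by rewrite !big_ord0 cards0.
rewrite !big_ord_recr /= cardsU IH => [|i j /andP[ij jm]]; last first.
  by apply: H; rewrite ij ltnW.
rewrite (_ : _ :&: _ = set0) ?cards0 ?subn0 //; apply: disjoint_setI0.
rewrite disjoint_sym; apply: bigcup_disjoint => i _; rewrite disjoint_sym.
by apply: H; rewrite ltn_ord /=.
Qed.

Section Count.
Variable (F : finFieldType).

Definition Sv k N (A : 'M[F]_(k, N)) := [set v : 'rV[F]_N | (v <= A)%MS].

Lemma card_Sv k N (A : 'M[F]_(k, N)) : #|Sv A| = (#|F| ^ \rank A)%N.
Proof.
have inj := row_free_inj (row_base_free A).
rewrite -[\rank A]mul1n -card_mx -(card_imset _ (inj 1%N)).
apply: eq_card => v; rewrite inE -(eq_row_base A).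
apply/submxP/imsetP => [[u ->]|[u _ ->]]; first by exists u.
by exists u.
Qed.

Lemma rank_sum_le p L N (M : 'I_p -> 'M[F]_(L, N)) :
  (\rank (\sum_(k < p) <<M k>>)%MS <= p * L)%N.
Proof.
elim: p M => [|p IH] M; first by rewrite big_ord0 mxrank0.
rewrite big_ord_recr /=; apply: leq_trans (mxrank_adds_leqif _ _).1 _.
by rewrite mulSnr leq_add ?IH // genmxE rank_leq_row.
Qed.

End Count.

Section ClaimC.
Variables (V1 E1 : finType) (tl1 hd1 : E1 -> V1) (s1 : V1) (T1 : {set V1}) (w n : nat).
Variables (F : finFieldType) (L : nat).
Local Notation NE := (Nedge E1 w n).
Local Notation Ntl' := (@Ntl V1 E1 tl1 w n).
Local Notation Nhd' := (@Nhd V1 E1 hd1 s1 w n).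
Variables (K : NE -> NE -> 'M[F]_L) (G : NE -> 'M[F]_(w * L, L)).
Hypotheses (L0 : (0 < L)%N) (w2 : (2 <= w)%N)
  (solN : sol Ntl' Nhd' (N_s' V1 n) (Nrcv T1 n) K G).

Definition R e := (G e)^T.
Definition Ri (i : nat) := R (e_ci E1 w (inord i : 'I_n.+1)).
Definition W := rsum Nhd' G (N_of2 V1 (csrc n.+1)).

Lemma Rsub e : Ntl' e != N_s' V1 n -> (R e <= rsum Nhd' G (Ntl' e))%MS.
Proof. by move=> He; case: solN => _ _ Hr _; exact: (sol_rec_sub Hr He). Qed.

Lemma Ri_W i : (Ri i <= W)%MS.
Proof. exact: Rsub. Qed.

Lemma W_rank : (\rank W <= L + L)%N.
Proof.
rewrite /W /rsum big_In_c; have := rank_sum_le (fun k : 'I_2 => R (e_2 E1 w n k)).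
by rewrite mul2n addnn.
Qed.

Lemma Ri_pair i j : (i < j <= n)%N ->
  \rank (Ri i :&: Ri j)%MS = 0%N /\ \rank (Ri i) = L /\ \rank (Ri j) = L.
Proof.
case/andP=> ij jn; have iN : (i < n.+1)%N by lia.
have jN : (j < n.+1)%N by [].
pose i' : 'I_n.+1 := Ordinal iN; pose j' : 'I_n.+1 := Ordinal jN.
have ij' : (i' < j')%N by [].
pose x : cpair n.+1 := exist _ (i', j') ij'.
have xR : N_of2 V1 (inr x) \in Nrcv T1 n.
  by apply/setUP; right; apply/imsetP; exists (inr x) => //; apply/imsetP; exists x.
case: solN => _ _ _ /(_ _ xR); rewrite /rsum big_In_r => Hr.
have Hi : Ri i = R (e_ci E1 w i').
  by rewrite /Ri (_ : inord i = i') //; apply/val_inj; rewrite /= inordK.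
have Hj : Ri j = R (e_ci E1 w j').
  by rewrite /Ri (_ : inord j = j') //; apply/val_inj; rewrite /= inordK.
have Hsub : ((\sum_b <<(G (e_cr E1 w x b))^T>>)%MS <= Ri i + Ri j)%MS.
  apply/sumsmx_subP => b _; rewrite genmxE.
  apply: submx_trans (Rsub _) _ => //.
  rewrite /rsum /= big_In_i genmxE Hi Hj; case: b => /=.
    exact: addsmxSr.
  exact: addsmxSl.
set D := (\sum_(k < w - 2) _)%MS in Hr.
have HD : (\rank D <= (w - 2) * L)%N by apply: rank_sum_le.
have H1 : (w * L <= \rank (Ri i + Ri j) + (w - 2) * L)%N.
  apply: leq_trans (leq_add (leqnn _) HD).
  apply: leq_trans (mxrank_adds_leqif _ _).1.
  move: Hr; set B := (\big[_/_]_b _) => Hr.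
  have : (\rank (B + D)%MS <= \rank (Ri i + Ri j + D)%MS)%N.
    by apply: mxrankS; apply: addsmxS.
  by rewrite [X in (X <= _)%N -> _]Hr.
have := mxrank_sum_cap (Ri i) (Ri j).
have := rank_leq_row (Ri i); have := rank_leq_row (Ri j).
rewrite mulnBl in H1.
have : (2 * L <= w * L)%N by rewrite leq_mul2r w2 orbT.
lia.
Qed.


Lemma claimC : (n <= #|F| ^ L)%N.
Proof.
case: (posnP n) => [->//|n0]; set Q := (#|F| ^ L)%N.
have Q1 : (1 < Q)%N by rewrite /Q -(expn0 #|F|) ltn_exp2l // finNzRing_gt1.
have rk i : (i <= n)%N -> \rank (Ri i) = L.
  move=> iN; case: (ltnP i n) => Hi.
    by have [_ [-> _]] := @Ri_pair i n (introT andP (conj Hi (leqnn _))).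
  have -> : i = n by apply/eqP; rewrite eqn_leq iN Hi.
  by have [_ [_ ->]] := @Ri_pair 0 n (introT andP (conj n0 (leqnn _))).
pose S i := Sv (Ri i) :\ 0.
have cS i : (i <= n)%N -> #|S i| = Q.-1.
  move=> iN; have := cardsD1 0 (Sv (Ri i)).
  by rewrite card_Sv rk // inE sub0mx /= /Q => ->.
have dS : forall i j, (i < j < n.+1)%N -> [disjoint S i & S j].
  move=> i j /andP[ij jN]; have [cap _] := @Ri_pair i j (introT andP (conj ij jN)).
  rewrite -setI_eq0; apply/eqP/setP => v; rewrite !inE.
  apply/negP => /andP[/andP[nz0 vi] /andP[nz1 vj]].
  have : (v <= Ri i :&: Ri j)%MS by rewrite sub_capmx vi vj.
  move/eqP: cap; rewrite mxrank_eq0 => /eqP ->; rewrite submx0.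
  by rewrite (negbTE nz0).
have Hu : \bigcup_(i < n.+1) S i \subset Sv W :\ 0.
  apply/bigcupsP => i _; apply/subsetP => v; rewrite !inE => /andP[-> vi] /=.
  exact: submx_trans vi (Ri_W i).
have := subset_leq_card Hu; rewrite card_bigcup_disj //.
rewrite (eq_bigr (fun _ => Q.-1)) => [|i _]; last by apply: cS; rewrite -ltnS.
rewrite sum_nat_const card_ord.
have := cardsD1 0 (Sv W); rewrite card_Sv inE sub0mx => HSW H1.
have H2 : (#|F| ^ \rank W <= Q * Q)%N.
  by rewrite /Q -expnD leq_exp2l ?finNzRing_gt1 // W_rank.
rewrite HSW /= in H2.
move: Q1 H1 H2; set X := #|_ :\ _|; clearbody Q X; clear; case: Q => [|P] //= Q1 H1 H2.
have : (n.+1 * P <= (P + 2) * P)%N.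
  apply: leq_trans H1 _; rewrite mulnDl; move: H2; rewrite mulSn mulnS => H2.
  have H3 : (X < P.+1 + (P + P * P))%N by exact: H2.
  lia.
rewrite leq_pmul2r //; lia.
Qed.

End ClaimC.

End MP6.
Import MP6.

Module MP7.
Local Open Scope ring_scope.

Lemma idx_lt (i c w L : nat) : (i < w)%N -> (c < L)%N -> (i * L + c < w * L)%N.
Proof.
move=> iw cL; apply: leq_trans (_ : i.+1 * L <= w * L)%N; last by rewrite leq_mul2r iw orbT.
by rewrite mulSn addnC ltn_add2r.
Qed.

Section Triv.
Variables (V E : finType) (tl hd : E -> V) (F : fieldType) (L m : nat) (s : V) (T : {set V}).

Lemma triv_sol x0 : x0 \in Out_ tl s -> #|Out_ tl s| = m -> (forall t, t \notin T) ->
  exists (K : E -> E -> 'M[F]_L) (G : E -> 'M[F]_(m * L, L)), sol tl hd s T K G.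
Proof.
move=> Hx0 Hm HT.
pose iota e := cast_ord Hm (enum_rank_in Hx0 e).
exists (fun _ _ => 0), (fun e => if tl e == s then id_block F m L (iota e) else 0).
split=> //.
- exists iota; split.
    move=> a b Ha Hb /(congr1 (cast_ord (esym Hm))); rewrite !cast_ordK.
    exact: enum_rank_in_inj.
  by move=> e; rewrite inE => ->.
- move=> e /negbTE ->; rewrite big1 // => d _; exact: mulmx0.
- by move=> t; rewrite (negbTE (HT t)).
Qed.
End Triv.

Section ClaimB.
Variables (V1 E1 : finType) (tl1 hd1 : E1 -> V1) (s1 : V1) (T1 : {set V1}) (w n : nat).
Variables (F : fieldType) (L : nat).
Local Notation NE := (Nedge E1 w n).
Local Notation Ntl' := (@Ntl V1 E1 tl1 w n).
Local Notation Nhd' := (@Nhd V1 E1 hd1 s1 w n).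
Variables (K : NE -> NE -> 'M[F]_L) (G : NE -> 'M[F]_(w * L, L)).
Hypotheses (L0 : (0 < L)%N) (Hw : #|Out_ tl1 s1| = w)
  (mult : multicast_network tl1 hd1 s1 T1)
  (solN : sol Ntl' Nhd' (N_s' V1 n) (Nrcv T1 n) K G).

Definition R1 (d : E1) := (G (e_1 w n d))^T.
Definition P1 := (\sum_(e in Out_ tl1 s1) <<R1 e>>)%MS.

Lemma R1sub d : tl1 d != s1 -> (R1 d <= \sum_(d' in In_ hd1 (tl1 d)) <<R1 d'>>)%MS.
Proof.
move=> Hd; case: solN => _ _ Hr _.
have := sol_rec_sub Hr (e := e_1 w n d) isT.
by rewrite /rsum /= big_In_1 (negbTE Hd) Monoid.mulm1.
Qed.

Lemma R1_P d : (R1 d <= P1)%MS.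
Proof.
case: mult => [[r acyc] _ _].
suff: forall k d, (r (tl1 d) < k)%N -> (R1 d <= P1)%MS by apply; apply: ltnSn.
elim=> [|k IH] {}d //= Hk.
case: (tl1 d =P s1) => [Hs|Hs].
  by rewrite /P1 (sumsmx_sup d) ?genmxE // inE Hs.
apply: submx_trans (R1sub (introN eqP Hs)) _.
apply/sumsmx_subP => d' Hd'; rewrite genmxE; apply: IH.
rewrite inE in Hd'; move/eqP: Hd' => Hd'.
by have := acyc d'; rewrite Hd'; move=> h; apply: leq_trans h _.
Qed.

Hypothesis w0 : (0 < w)%N.

Lemma T1s1 t : t \in T1 -> t != s1.
Proof. by apply: rcv_neq_src mult _ t; rewrite /src_dim Hw. Qed.

Lemma rsumN1 t : t \in T1 ->
  rsum Nhd' G (N_of1 n t) = (\sum_(d in In_ hd1 t) <<R1 d>>)%MS.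
Proof. by move=> Ht; rewrite /rsum big_In_1 (negbTE (T1s1 Ht)) Monoid.mulm1. Qed.

Variable t0 : V1.
Hypothesis t0T : t0 \in T1.

Lemma P1_rank : \rank P1 = (w * L)%N.
Proof.
apply/eqP; rewrite eqn_leq rank_leq_col /=.
case: solN => _ _ _ /(_ (N_of1 n t0)) Hr.
have t0R : N_of1 n t0 \in Nrcv T1 n by apply/setUP; left; apply/imsetP; exists t0.
move: (Hr t0R); rewrite rsumN1 // => HH.
rewrite -[X in (X <= _)%N]HH mxrankS //.
by apply/sumsmx_subP => d _; rewrite genmxE R1_P.
Qed.

Lemma x0Out : exists x0, x0 \in Out_ tl1 s1.
Proof. by apply/set0Pn; rewrite -card_gt0 Hw. Qed.

Variable x0 : E1.
Hypothesis Hx0 : x0 \in Out_ tl1 s1.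

Definition iotaB (e : E1) : 'I_w := cast_ord Hw (enum_rank_in Hx0 e).
Definition enumO (j : 'I_w) : E1 := @enum_val E1 (mem (Out_ tl1 s1)) (cast_ord (esym Hw) j).

Lemma enumOK e : e \in Out_ tl1 s1 -> enumO (iotaB e) = e.
Proof. by move=> He; rewrite /enumO /iotaB cast_ordK enum_rankK_in. Qed.

Lemma enumO_in j : enumO j \in Out_ tl1 s1.
Proof. exact: enum_valP. Qed.


Lemma jr_lt (r : 'I_(w * L)) : (r %/ L < w)%N.
Proof. by rewrite ltn_divLR. Qed.

Definition MB : 'M[F]_(w * L) :=
  \matrix_(r, c) R1 (enumO (Ordinal (jr_lt r))) (Ordinal (ltn_pmod r L0)) c.

Lemma MB_row r : row r MB = row (Ordinal (ltn_pmod r L0)) (R1 (enumO (Ordinal (jr_lt r)))).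
Proof. by apply/rowP => k; rewrite !mxE. Qed.

Lemma R1_row e c : e \in Out_ tl1 s1 ->
  row c (R1 e) = row (Ordinal (idx_lt (ltn_ord (iotaB e)) (ltn_ord c))) MB.
Proof.
move=> He; rewrite MB_row.
set r := Ordinal (idx_lt _ _).
have -> : Ordinal (jr_lt r) = iotaB e.
  by apply/val_inj; rewrite /= divnMDl // divn_small ?addn0.
have -> : Ordinal (ltn_pmod r L0) = c.
  by apply/val_inj; rewrite /= modnMDl modn_small.
by rewrite enumOK.
Qed.

Lemma MB_P1 : (MB :=: P1)%MS.
Proof.
apply/eqmxP/andP; split.
  apply/row_subP => r; rewrite MB_row; exact: submx_trans (row_sub _ _) (R1_P _).
apply/sumsmx_subP => e He; rewrite genmxE; apply/row_subP => c.
by rewrite (R1_row c He) row_sub.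
Qed.

Lemma MB_unit : MB \in unitmx.
Proof. by rewrite -row_free_unit /row_free MB_P1 P1_rank. Qed.

Definition YB := invmx MB.

Lemma R1Y e : e \in Out_ tl1 s1 -> R1 e *m YB = (id_block F w L (iotaB e))^T.
Proof.
move=> He; apply/row_matrixP => c.
rewrite row_mul (R1_row c He) -row_mul mulmxV ?MB_unit // row1.
by apply/rowP => k; rewrite !mxE.
Qed.

Definition K1B (d e : E1) := K (e_1 w n d) (e_1 w n e).
Definition G1B (d : E1) := (R1 d *m YB)^T.

Lemma claimB_sol : sol tl1 hd1 s1 T1 K1B G1B.
Proof.
case: solN => HK _ Hr Hrk.
split.
- by move=> d e Hde; apply: HK; rewrite /= eq_of1.
- exists iotaB; split.
    move=> a b Ha Hb /(congr1 (cast_ord (esym Hw))); rewrite !cast_ordK.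
    exact: enum_rank_in_inj.
  by move=> e He; rewrite /G1B R1Y // trmxK.
- move=> e He; rewrite /G1B trmx_mul /R1 trmxK Hr //=.
  rewrite big_In_1 (negbTE He) Monoid.mulm1 mulmx_sumr; apply: eq_bigr => d _.
  by rewrite /K1B mulmxA trmx_mul trmxK.
- move=> t Ht.
  have tR : N_of1 n t \in Nrcv T1 n by apply/setUP; left; apply/imsetP; exists t.
  move: (Hrk _ tR); rewrite rsumN1 // => HH.
  have E : (rsum hd1 G1B t :=: (\sum_(d in In_ hd1 t) <<R1 d>>)%MS *m YB)%MS.
    apply/eqmxP/andP; split.
      apply/sumsmx_subP => d Hd; rewrite genmxE /G1B trmxK submxMr //.
      by rewrite (sumsmx_sup d) // genmxE.
    rewrite sumsmxMr_gen; apply/sumsmx_subP => d Hd; rewrite genmxE.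
    by rewrite (eqmxMr _ (genmxE _)) /rsum (sumsmx_sup d) // genmxE /G1B trmxK.
  by rewrite E mxrankMfree ?HH // row_free_unit unitmx_inv MB_unit.
Qed.

End ClaimB.

Lemma claimB (V1 E1 : finType) (tl1 hd1 : E1 -> V1) (s1 : V1) (T1 : {set V1}) (w n : nat)
  (F : fieldType) (L : nat) (K : Nedge E1 w n -> Nedge E1 w n -> 'M[F]_L)
  (G : Nedge E1 w n -> 'M[F]_(w * L, L)) :
  (0 < L)%N -> #|Out_ tl1 s1| = w -> (0 < w)%N -> multicast_network tl1 hd1 s1 T1 ->
  sol (@Ntl V1 E1 tl1 w n) (@Nhd V1 E1 hd1 s1 w n) (N_s' V1 n) (Nrcv T1 n) K G ->
  exists (K1 : E1 -> E1 -> 'M[F]_L) (G1 : E1 -> 'M[F]_(w * L, L)), sol tl1 hd1 s1 T1 K1 G1.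
Proof.
move=> L0 Hw w0 mult solN.
have [x0 Hx0] : exists x0, x0 \in Out_ tl1 s1 by apply/set0Pn; rewrite -card_gt0 Hw.
case: (set_0Vmem T1) => [T0|[t0 Ht0]].
  by apply: (triv_sol hd1 F L Hx0 Hw) => t; rewrite T0 inE.
by eexists; eexists; apply: (claimB_sol L0 Hw mult solN w0 Ht0 Hx0).
Qed.

End MP7.
Import MP7.


Theorem theorem4 (q L : nat) (V1 E1 : finType) (tl1 hd1 : E1 -> V1)
    (s1 : V1) (T1 : {set V1}) :
  prime_power q -> (0 < L)%N ->
  multicast_network tl1 hd1 s1 T1 ->
  (2 <= src_dim tl1 s1)%N ->
  vl_solvable tl1 hd1 s1 T1 q L ->
  ~ sl_solvable tl1 hd1 s1 T1 (q ^ L) ->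
  let w := src_dim tl1 s1 in
  let n := (q ^ L)%N in
  let N_tl := @Ntl V1 E1 tl1 w n in
  let N_hd := @Nhd V1 E1 hd1 s1 w n in
  let N_T := Nrcv T1 n in
  [/\ vl_solvable N_tl N_hd (N_s' V1 n) N_T q L,
      forall q', prime_power q' -> (q' <= q ^ L)%N ->
        ~ sl_solvable N_tl N_hd (N_s' V1 n) N_T q' &
      forall q' L', prime_power q' -> (0 < L')%N -> (q' ^ L' < q ^ L)%N ->
        ~ vl_solvable N_tl N_hd (N_s' V1 n) N_T q' L'].
Proof.
move=> [p [k [pr_p k0 Hq]]] L0 mult w2 vl nsl w n N_tl N_hd N_T.
have w0 : (0 < w)%N by apply: leq_trans w2.
have bound : forall q' L', (0 < L')%N -> vl_solvable N_tl N_hd (N_s' V1 n) N_T q' L' ->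
    (n <= q' ^ L')%N.
  move=> q' L' L'0 /vl_solvableE [F' [HF' HH]].
  rewrite /N_tl src_dimN in HH; case: HH => K [G solN].
  by rewrite -HF'; apply: (claimC L'0 w2 solN).
split.
- have /vl_solvableE [F [HF [K1 [G1 sol1]]]] := vl.
  have Hext := ext_field pr_p k0 (etrans HF Hq) L0.
  have [C [_ HC]] := spread Hext.
  have [In0 _] : In_ hd1 s1 = set0 /\ True by case: mult.
  have HT : forall t, t \in T1 -> t != s1 by apply: rcv_neq_src mult _.
  rewrite HF in HC.
  have [K [G solN]] := claimA L0 w2 In0 HT sol1 HC.
  apply/vl_solvableE; exists F; split => //.
  by rewrite /N_tl src_dimN; exists K, G.
- move=> q' _ le; case: (ltngtP q' (q ^ L)) => [lt|gt|eq].
  + move=> /(bound _ 1%N isT); rewrite expn1 => le'.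
    by move: (leq_ltn_trans le' lt); rewrite /n ltnn.
  + by move: (leq_ltn_trans le gt); rewrite ltnn.
  + move=> /vl_solvableE [F' [HF' HH]].
    rewrite /N_tl src_dimN in HH; case: HH => K [G solN].
    have Hw : #|Out_ tl1 s1| = w by [].
    have [K1 [G1 sol1]] := claimB (L := 1%N) isT Hw w0 mult solN.
    apply: nsl; apply/vl_solvableE; exists F'; split; first by rewrite HF' eq.
    by exists K1, G1.
- move=> q' L' _ L'0 lt /(bound _ _ L'0) le.
  by move: (leq_ltn_trans le lt); rewrite /n ltnn.
Qed.
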